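(* Let $r\ge 1$ and let $G$ be an $r$-regular graph of order $n$. Then $\mathrm{LIF}(G)\ge \frac{2}{r+1}\,n$. Moreover, the bound is sharp: for the complete graph $K_{r+1}$ (which is $r$-regular of order $r+1$) one has $\mathrm{LIF}(K_{r+1})=2=\frac{2}{r+1}(r+1)$.
   Context: All graphs are finite and simple. A linear forest is a forest each of whose connected components is a path (a single vertex counts as a path). For a graph $G$, $\mathrm{LIF}(G)$ denotes the maximum number of vertices of an induced subgraph of $G$ that is a linear forest. The order of a graph is its number of vertices. *)

(* Defs.v *)
From mathcomp Require Import all_boot.
Set Implicit Arguments. Unset Strict Implicit. Unset Printing Implicit Defensive.

Definition simple_graph (T : finType) (e : rel T) : Prop := symmetric e /\ irreflexive e.

Definition regular (T : finType) (e : rel T) (r : nat) : Prop :=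
  forall v : T, #|[set w | e v w]| = r.

Definition ideg (T : finType) (e : rel T) (S : {set T}) (v : T) : nat :=
  #|[set w in S | e v w]|.

(* Since a duplicate-free sequence over T has length <= #|T|, we quantify over
   tuples of length n <= #|T| to obtain a boolean (decidable) predicate. *)
Definition has_cycle_in (T : finType) (e : rel T) (S : {set T}) : bool :=
  [exists n : 'I_#|T|.+1, [exists c : n.-tuple T,
     [&& 3 <= size c, uniq c, all (fun x => x \in S) c & cycle e c]]].

(* G[S] is a linear forest: a forest (acyclic) all of whose vertices have degree <= 2,
   i.e. every component is a path. *)
Definition linear_forest (T : finType) (e : rel T) (S : {set T}) : bool :=
  ~~ has_cycle_in e S && [forall v in S, ideg e S v <= 2].

Definition LIF (T : finType) (e : rel T) : nat :=
  \max_(S : {set T} | linear_forest e S) #|S|.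

Definition complete_rel (m : nat) : rel 'I_m := fun i j => i != j.

(* Main.v *)
Require Import Defs.
From mathcomp Require Import all_boot zify.
Set Implicit Arguments. Unset Strict Implicit. Unset Printing Implicit Defensive.

Section Cyc.
Variables (T : finType) (e : rel T).
Hypothesis sym : symmetric e.

Definition cyc (S : {set T}) (c : seq T) :=
  [&& 3 <= size c, uniq c, all (fun x => x \in S) c & cycle e c].

Lemma has_cycleP S : reflect (exists c, cyc S c) (has_cycle_in e S).
Proof.
apply: (iffP existsP) => [[n /existsP [c Hc]]|[c Hc]].
  by exists c.
have Hs : size c < #|T|.+1.
  case/and4P: Hc => _ u _ _; move/card_uniqP: u => u; rewrite ltnS -u; exact: max_card.
exists (Ordinal Hs); apply/existsP; exists (@Tuple _ _ c (eqxx _)); exact: Hc.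
Qed.

Lemma two_nbrs S c x : cyc S c -> x \in c ->
  exists a b, [/\ a != b, a \in c, b \in c, e x a & e x b].
Proof.
case/and4P=> sz u _ cy xc.
case: (rot_to xc) => i s Hr.
have cy' : cycle e (x :: s) by rewrite -Hr rot_cycle.
have u' : uniq (x :: s) by rewrite -Hr rot_uniq.
have sz' : 3 <= size (x :: s) by rewrite -Hr size_rot.
have mc : forall y, y \in x :: s -> y \in c by move=> y; rewrite -Hr mem_rot.
case: s Hr cy' u' sz' mc => [|a [|y s']] //= Hr cy' u' sz' mc.
rewrite rcons_path /= in cy'.
case/and3P: cy' => exa _ ebx.
exists a, (last y s'); split.
- apply/negP => /eqP E. case/andP: u' => _ /andP [/negP H _]; apply: H.
  by rewrite E mem_last.
- by apply: mc; rewrite !inE eqxx orbT.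
- by apply: mc; have := mem_last y s'; rewrite !inE => ->; rewrite !orbT.
- exact: exa.
- by case/andP: ebx => _; rewrite sym.
Qed.

Lemma cyc_deg2 S : has_cycle_in e S -> exists2 x, x \in S & 2 <= ideg e S x.
Proof.
case/has_cycleP=> c Hc.
have : 0 < size c by case/and4P: Hc => sz _ _ _; exact: leq_trans sz.
case: c Hc => // x s Hc _.
have xc : x \in x :: s by rewrite inE eqxx.
have allS : forall y, y \in x :: s -> y \in S.
  by case/and4P: Hc => _ _ /allP H _.
case: (two_nbrs Hc xc) => a [b [ab ac bc ea eb]].
exists x; first exact: allS.
have <- : #|[set a; b]| = 2 by rewrite cards2 ab.
rewrite /ideg; apply: subset_leq_card.
apply/subsetP => y; rewrite !inE => /orP [] /eqP ->; rewrite ?allS //=.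
Qed.

Lemma cyc_card S : has_cycle_in e S -> 3 <= #|S|.
Proof.
case/has_cycleP=> c /and4P [sz u /allP H _].
move/card_uniqP: u => u; apply: leq_trans sz _; rewrite -u; apply: subset_leq_card.
by apply/subsetP => y /H.
Qed.

Lemma deg1_lf (A : {set T}) : (forall v, v \in A -> ideg e A v <= 1) -> linear_forest e A.
Proof.
move=> H; apply/andP; split.
  apply/negP => /cyc_deg2 [x xA]; rewrite leqNgt => /negP; apply.
  by rewrite ltnS H.
by apply/forall_inP => v vA; apply: leq_trans (H v vA) _.
Qed.

Lemma lf_le_LIF (A : {set T}) : linear_forest e A -> #|A| <= LIF e.
Proof. move=> H; rewrite /LIF; exact: (@leq_bigmax_cond _ (linear_forest e) (fun S : {set T} => #|S|) A H). Qed.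

End Cyc.


Section Deg2.
Variables (T : finType) (e : rel T).
Hypothesis sym : symmetric e.

Definition oncyc (S : {set T}) (x : T) :=
  [exists n : 'I_#|T|.+1, [exists c : n.-tuple T, cyc e S c && (x \in c)]].

Lemma oncycP S x : reflect (exists c, cyc e S c && (x \in c)) (oncyc S x).
Proof.
apply: (iffP existsP) => [[n /existsP [c Hc]]|[c Hc]].
  by exists c.
have Hs : size c < #|T|.+1.
  case/andP: Hc => /and4P [_ u _ _] _.
  move/card_uniqP: u => u; rewrite ltnS -u; exact: max_card.
exists (Ordinal Hs); apply/existsP; exists (@Tuple _ _ c (eqxx _)); exact: Hc.
Qed.

Variable B : {set T}.
Hypothesis hB : forall v, v \in B -> ideg e B v <= 2.

Lemma nbr_closed (S : {set T}) c y z : cyc e S c -> S \subset B ->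
  y \in c -> z \in B -> e y z -> z \in c.
Proof.
move=> Hc sSB yc zB eyz.
have cS : forall u, u \in c -> u \in B.
  by case/and4P: Hc => _ _ /allP H _ u /H uS; apply: (subsetP sSB).
case: (two_nbrs sym Hc yc) => a [b [ab ac bc ea eb]].
apply/negPn/negP => zc.
have za : z != a by apply/eqP => E; rewrite E ac in zc.
have zb : z != b by apply/eqP => E; rewrite E bc in zc.
have H3 : #|z |: [set a; b]| = 3.
  by rewrite cardsU1 cards2 ab !inE negb_or za zb.
have := hB (cS _ yc); rewrite /ideg leqNgt => /negP; apply.
apply: (leq_trans (n := #|z |: [set a; b]|)); first by rewrite H3.
apply: subset_leq_card; apply/subsetP => u.
rewrite !inE => /orP [/eqP ->|/orP [] /eqP ->]; rewrite ?zB ?eyz ?cS //.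
Qed.

Lemma path_closed (W : pred T) x s :
  (forall y z, W y -> z \in B -> e y z -> W z) ->
  W x -> path e x s -> all (fun u => u \in B) s -> all W s.
Proof.
move=> Hcl; elim: s x => [|y s IH] x //= Wx /andP [exy ps] /andP [yB aB].
have Wy : W y by exact: Hcl Wx yB exy.
by rewrite Wy (IH y).
Qed.

Lemma cyc_sub S S' c c' x : cyc e S c -> cyc e S' c' ->
  S \subset B -> S' \subset B -> x \in c -> x \in c' -> {subset c <= c'}.
Proof.
move=> Hc Hc' sSB sS'B xc xc'.
have cB : forall u, u \in c -> u \in B.
  by case/and4P: Hc => _ _ /allP H _ u /H uS; apply: (subsetP sSB).
case: (rot_to xc) => i s Hr.
have cy' : cycle e (x :: s) by rewrite -Hr rot_cycle; case/and4P: Hc.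
have mc : forall y, y \in x :: s -> y \in c by move=> y; rewrite -Hr mem_rot.
move: cy'; rewrite /= rcons_path => /andP [ps _].
have aB : all (fun u => u \in B) s.
  by apply/allP => u us; apply: cB; apply: mc; rewrite inE us orbT.
have := path_closed (W := fun u => u \in c') _ xc' ps aB.
move=> H; have {}H : all (fun u => u \in c') s.
  apply: H => y z yc' zB eyz; exact: nbr_closed Hc' sS'B yc' zB eyz.
move=> y; rewrite -(mem_rot i) Hr inE => /orP [/eqP ->|ys] //.
exact: (allP H).
Qed.


Lemma deg2_forest : exists F : {set T},
  [/\ F \subset B, linear_forest e F & 2 * #|B| <= 3 * #|F|].
Proof.
pose PD := fun D : {set T} => (D \subset B) && ~~ has_cycle_in e (B :\: D).
have PB : PD B.
  by rewrite /PD subxx /=; apply/negP => /cyc_card; rewrite setDv cards0.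
case: (@arg_minnP _ B PD (fun D => #|D|) PB) => D /andP [sDB ncD] minD.
pose Bd d := B :\: (D :\ d).
pose Z d := [set x | oncyc (Bd d) x].
have hasc : forall d, d \in D -> has_cycle_in e (Bd d).
  move=> d dD; apply: contraT => nc.
  have H : PD (D :\ d).
    by apply/andP; split; [apply: subset_trans (subD1set D d) sDB | exact: nc].
  have := minD _ H; rewrite (cardsD1 d D) dD; lia.
have hitd : forall d c, d \in D -> cyc e (Bd d) c -> d \in c.
  move=> d c dD Hc; apply/negPn/negP => dc; apply: (negP ncD); apply/has_cycleP.
  exists c; case/and4P: Hc => s u /allP a cy; apply/and4P; split=> //.
  apply/allP => y yc; have := a y yc; rewrite !inE => /andP [H yB].
  rewrite yB andbT; apply: contra H => yD; rewrite yD andbT.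
  by apply/eqP => E; move: dc; rewrite -E yc.
have sBd : forall d, Bd d \subset B by move=> d; exact: subsetDl.
have dZ : forall d, d \in D -> d \in Z d.
  move=> d dD; case/has_cycleP: (hasc d dD) => c Hc.
  rewrite inE; apply/oncycP; exists c; rewrite Hc; exact: hitd.
have Zsub : forall d, Z d \subset B.
  move=> d; apply/subsetP => x; rewrite inE => /oncycP [c /andP [Hc xc]].
  case/and4P: Hc => _ _ /allP a _; apply: (subsetP (sBd d)); exact: a.
have Zcard : forall d, d \in D -> 3 <= #|Z d|.
  move=> d dD; case/has_cycleP: (hasc d dD) => c Hc.
  have : 3 <= #|[set x in c]|.
    rewrite cardsE; case/and4P: Hc => sz u _ _; move/card_uniqP: u => ->; exact: sz.
  move=> H; apply: leq_trans H _; apply: subset_leq_card; apply/subsetP => x.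
  rewrite !inE => xc; apply/oncycP; exists c; by rewrite Hc xc.
have Zd : forall d d' x, d \in D -> d' \in D -> x \in Z d -> x \in Z d' -> d = d'.
  move=> d d' x dD d'D; rewrite !inE => /oncycP [c /andP [Hc xc]] /oncycP [c' /andP [Hc' xc']].
  have sub := cyc_sub Hc Hc' (sBd d) (sBd d') xc xc'.
  have := sub _ (hitd _ _ dD Hc).
  case/and4P: Hc' => _ _ /allP a _ => /a; rewrite !inE dD andbT => /andP [H _].
  by apply/eqP; move: H; rewrite negbK.
have injZ : {in D &, injective Z}.
  move=> d d' dD d'D E; apply: (Zd d d' d dD d'D (dZ d dD)); rewrite -E; exact: dZ.
have trivI : trivIset (Z @: D).
  apply/trivIsetP => A A' /imsetP [d dD ->] /imsetP [d' d'D ->] neq.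
  rewrite disjoints_subset; apply/subsetP => x x1; rewrite inE; apply/negP => x2.
  have E := Zd _ _ _ dD d'D x1 x2.
  by rewrite E eqxx in neq.
have key : 3 * #|D| <= #|B|.
  have [_] := leq_card_cover (Z @: D); rewrite trivI => /eqP E.
  apply: (@leq_trans (\sum_(A in Z @: D) #|A|)).
    rewrite big_imset //= mulnC -sum_nat_const; apply: leq_sum => d dD.
    exact: Zcard.
  rewrite -E; apply: subset_leq_card; apply/bigcupsP => A /imsetP [d _ ->].
  exact: Zsub.
exists (B :\: D); split.
- exact: subsetDl.
- apply/andP; split => //; apply/forall_inP => v vF.
  have vB : v \in B by case/setDP: vF.
  apply: leq_trans (hB vB).
  rewrite /ideg; apply: subset_leq_card; apply/subsetP => u.
  rewrite inE => /andP [uF evu]; rewrite inE evu andbT; by case/setDP: uF.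
- rewrite cardsD (setIidPr sDB).
  have : #|D| <= #|B| by apply: subset_leq_card.
  lia.
Qed.

End Deg2.


Section Lov.
Variables (T : finType) (e : rel T) (m : nat) (w : 'I_m -> nat).
Hypothesis sym : symmetric e.
Hypothesis irr : irreflexive e.

Definition pdeg (f : T -> 'I_m) v j := #|[set y | e v y && (f y == j)]|.

Definition Phi (f : T -> 'I_m) :=
  \sum_x \sum_y (e x y && (f x == f y)) * w (f x).

Definition Rest (f : T -> 'I_m) v :=
  \sum_(x | x != v) \sum_(y | y != v) (e x y && (f x == f y)) * w (f x).

Lemma side (f : T -> 'I_m) v j :
  \sum_(y | y != v) (e v y && (f y == j)) * w j = w j * pdeg f v j.
Proof.
rewrite /pdeg -sum1dep_card big_distrr /= muln1 big_mkcond /= [RHS]big_mkcond /=.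
apply: eq_bigr => y _; case: (eqVneq y v) => [->|yv] /=; first by rewrite irr.
by case: (e v y && (f y == j)); rewrite ?mul1n ?mul0n.
Qed.

Lemma Phi_dec (f : T -> 'I_m) v :
  Phi f = (w (f v) * pdeg f v (f v)).*2 + Rest f v.
Proof.
rewrite /Phi (bigD1 v) //= (bigD1 v) //= irr /= mul0n add0n.
have E : \sum_(x | x != v) \sum_y (e x y && (f x == f y)) * w (f x) =
  \sum_(x | x != v) ((e x v && (f x == f v)) * w (f x) +
   \sum_(y | y != v) (e x y && (f x == f y)) * w (f x)).
  by apply: eq_bigr => x _; rewrite (bigD1 v).
rewrite E; clear E.
rewrite big_split /= -/(Rest f v) addnA -addnn; congr (_ + _ + _).
  rewrite -(side f v (f v)); apply: eq_bigr => y _; by rewrite eq_sym.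
rewrite -(side f v (f v)); apply: eq_bigr => x _; rewrite sym.
by case: (eqVneq (f x) (f v)) => [->|]; rewrite ?andbF ?mul0n.
Qed.


Lemma pdeg_sum (f : T -> 'I_m) v : \sum_j pdeg f v j = #|[set y | e v y]|.
Proof.
rewrite -(sum1dep_card (fun y => e v y)) (partition_big f predT) //=.
by apply: eq_bigr => j _; rewrite /pdeg sum1dep_card.
Qed.

Lemma move_ineq (f : T -> 'I_m) v j :
  Phi f <= Phi (fun x => if x == v then j else f x) ->
  w (f v) * pdeg f v (f v) <= w j * pdeg f v j.
Proof.
set g := fun x => if x == v then j else f x.
rewrite (Phi_dec f v) (Phi_dec g v).
have -> : g v = j by rewrite /g eqxx.
have -> : pdeg g v j = pdeg f v j.
  rewrite /pdeg; apply: eq_card => y; rewrite !inE /g.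
  by case: (eqVneq y v) => [->|//]; rewrite irr.
have -> : Rest g v = Rest f v.
  apply: eq_bigr => x xv; apply: eq_bigr => y yv; by rewrite /g (negbTE xv) (negbTE yv).
rewrite leq_add2r -!muln2 leq_pmul2r //.
Qed.

Lemma lovasz r (d : 'I_m -> nat) P (i0 : 'I_m) :
  (forall v, #|[set y | e v y]| = r) -> 0 < P ->
  (forall i, w i * (d i).+1 = P) -> r < \sum_i (d i).+1 ->
  exists f : {ffun T -> 'I_m}, forall v, pdeg f v (f v) <= d (f v).
Proof.
move=> reg P0 wd rlt.
case: (@arg_minnP _ [ffun=> i0] predT (fun f : {ffun T -> 'I_m} => Phi f) isT)
  => f _ Hmin.
exists f => v; rewrite leqNgt; apply/negP => Hlt.
have Hj : forall j, d j < pdeg f v j.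
  move=> j.
  have H := Hmin [ffun x => if x == v then j else f x] isT.
  have E : Phi [ffun x => if x == v then j else f x] =
           Phi (fun x => if x == v then j else f x).
    by rewrite /Phi; apply: eq_bigr => x _; apply: eq_bigr => y _; rewrite !ffunE.
  rewrite E in H; have H2 := move_ineq H.
  have H1 : w (f v) * (d (f v)).+1 <= w (f v) * pdeg f v (f v).
    by rewrite leq_mul2l Hlt orbT.
  rewrite wd in H1.
  rewrite ltnNge; apply/negP => H3.
  have H4 : w j * pdeg f v j <= w j * d j by rewrite leq_mul2l H3 orbT.
  have := wd j; rewrite mulnS => H5.
  have H6 : 0 < w j by case: (w j) H5 P0 => [|//]; rewrite mul0n addn0 => <-.
  have H7 := leq_trans H1 (leq_trans H2 H4); rewrite -H5 in H7.
  move: H7; rewrite -{2}(add0n (w j * d j)) leq_add2r leqn0 => /eqP H8; by rewrite H8 in H6.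
have : \sum_j (d j).+1 <= \sum_j pdeg f v j by apply: leq_sum => j _; exact: Hj.
rewrite pdeg_sum reg; lia.
Qed.

End Lov.


Lemma cardT_sum (T : finType) m (f : T -> 'I_m) :
  #|T| = \sum_j #|[set x | f x == j]|.
Proof.
rewrite -cardsT -(sum1dep_card predT) (partition_big f predT) //=.
by apply: eq_bigr => j _; rewrite sum1dep_card.
Qed.

Lemma part1 (T : finType) (e : rel T) (r : nat) :
  1 <= r -> simple_graph e -> regular e r -> 2 * #|T| <= r.+1 * LIF e.
Proof.
move=> r1 [sym irr] reg.
have hodd := odd_double_half r.+1.
case Ek: (r.+1)./2 => [|k']; first by rewrite Ek /= in hodd; move: hodd; case: (odd r) => /=; lia.
pose c (i : 'I_k'.+1) := (val i == 0) && ~~ odd r.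
pose d (i : 'I_k'.+1) := if c i then 2 else 1.
pose w (i : 'I_k'.+1) := if c i then 2 else 3.
have hsum : \sum_i (d i).+1 = r.+1.
  rewrite big_ord_recl.
  rewrite (eq_bigr (fun _ => 2)); last by move=> i _; rewrite /d /c /=.
  rewrite sum_nat_const card_ord /d /c /=.
  move: hodd; rewrite Ek /=; case: (odd r) => /=; lia.
have wd : forall i, w i * (d i).+1 = 6 by move=> i; rewrite /w /d; case: (c i).
have rlt : r < \sum_i (d i).+1 by rewrite hsum.
have [f Hf] := lovasz sym irr (d := d) ord0 reg (isT : 0 < 6) wd rlt.
set L := LIF e.
have bound : forall j, 2 * #|[set x | f x == j]| <= (d j).+1 * L.
  move=> j.
  have hdeg : forall v, v \in [set x | f x == j] -> ideg e [set x | f x == j] v <= d j.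
    move=> v; rewrite inE => /eqP fv.
    have := Hf v; rewrite fv; apply: leq_trans; rewrite /ideg /pdeg.
    apply: subset_leq_card; apply/subsetP => y; rewrite !inE => /andP [-> ->] //.
  move: hdeg; rewrite /d; case: (c j) => hdeg.
  - have [F [sF lfF cF]] := deg2_forest sym hdeg.
    have := lf_le_LIF lfF; rewrite -/L; lia.
  - have := lf_le_LIF (deg1_lf sym hdeg); rewrite -/L; lia.
rewrite (cardT_sum f) big_distrr /= -hsum big_distrl /=.
by apply: leq_sum => j _; exact: bound.
Qed.

Lemma part2 (r : nat) : 1 <= r ->
  simple_graph (@complete_rel r.+1) /\ regular (@complete_rel r.+1) r /\
  LIF (@complete_rel r.+1) = 2.
Proof.
move=> r1.
have sym : symmetric (@complete_rel r.+1) by move=> x y; rewrite /complete_rel eq_sym.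
split; first by split => // x; rewrite /complete_rel eqxx.
split.
  move=> v; rewrite (_ : [set w | complete_rel v w] = [set~ v]) ?cardsC1 ?card_ord //.
  by apply/setP => u; rewrite !inE /complete_rel eq_sym.
apply/eqP; rewrite eqn_leq; apply/andP; split.
  rewrite /LIF; apply/bigmax_leqP => S /andP [ncS _].
  rewrite leqNgt; apply/negP => H3.
  apply: (negP ncS); apply/has_cycleP => //.
  move: H3; rewrite cardE.
  have u := enum_uniq (mem S).
  have mS : forall x, x \in enum S -> x \in S by move=> x; rewrite mem_enum.
  case: (enum S) u mS => [|a [|b [|c s]]] //= u mS _.
  exists [:: a; b; c]; rewrite /cyc /= !andbT.
  move: u; rewrite !inE !negb_or => /and4P [/and3P [ab ac _] /andP [bc _] _ _].
  rewrite ab ac bc !mS ?inE ?eqxx ?orbT //= /complete_rel ab bc eq_sym ac.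
  done.
pose S : {set 'I_r.+1} := [set ord0; ord_max].
have n0 : (ord0 : 'I_r.+1) != ord_max by rewrite -val_eqE /=; lia.
have cS : #|S| = 2 by rewrite cards2 n0.
rewrite -{1}cS; apply: (@leq_bigmax_cond _ (linear_forest (@complete_rel r.+1)) (fun S => #|S|)).
apply/andP; split.
  by apply/negP => /cyc_card; rewrite cS.
apply/forall_inP => v _; rewrite -cS /ideg; apply: subset_leq_card.
by apply/subsetP => y; rewrite inE => /andP [].
Qed.

Theorem theorem1 :
  (forall (T : finType) (e : rel T) (r : nat),
      1 <= r -> simple_graph e -> regular e r ->
      2 * #|T| <= r.+1 * LIF e) /\
  (forall r : nat, 1 <= r ->
      simple_graph (@complete_rel r.+1) /\ regular (@complete_rel r.+1) r /\
      LIF (@complete_rel r.+1) = 2).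
Proof. split; [exact: part1 | exact: part2]. Qed.

Print Assumptions theorem1.
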